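(* There exist two pairwise non-isomorphic Steiner systems $S(2,7,505)$. In particular, a Steiner system $S(2,7,505)$ exists.
   Context: For integers $2\le t<k<v$, a Steiner system $S(t,k,v)$ is a pair $(V,\mathcal B)$ where $V$ is a set with $|V|=v$ and $\mathcal B$ is a family of $k$-element subsets of $V$ (blocks) such that every $t$-element subset of $V$ is contained in exactly one block. Two Steiner systems $(V,\mathcal B)$ and $(V',\mathcal B')$ are isomorphic if there is a bijection $V\to V'$ mapping $\mathcal B$ onto $\mathcal B'$. *)

(* Defs.v *)
From mathcomp Require Import all_boot all_fingroup.
Set Implicit Arguments. Unset Strict Implicit. Unset Printing Implicit Defensive.

Definition steiner_system (t k v : nat) (B : {set {set 'I_v}}) : Prop :=
  [/\ 2 <= t, t < k, k < v,
      (forall b, b \in B -> #|b| = k) &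
      (forall S : {set 'I_v}, #|S| = t -> #|[set b in B | S \subset b]| = 1)].

Definition design_iso (v : nat) (B1 B2 : {set {set 'I_v}}) : Prop :=
  exists f : {perm 'I_v}, (fun b : {set 'I_v} => f @: b) @: B1 = B2.

(* Main.v *)
Require Import Defs.
From mathcomp Require Import all_boot all_fingroup.
From mathcomp Require Import all_algebra.
Import GRing.Theory.
Set Implicit Arguments. Unset Strict Implicit. Unset Printing Implicit Defensive.

Local Open Scope ring_scope.


Notation G := 'I_505.

Definition genG : seq G := [seq inZp i | i <- iota 0 505]%N.
Arguments genG : simpl never.

Lemma mem_genG (g : G) : g \in genG.
Proof.
apply/mapP; exists (val g); last by rewrite valZpK.
by rewrite mem_iota /= add0n ltn_ord.
Qed.

Definition sl (L : seq G) : {set G} := [set z in L].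
Definition blkL (l : seq G) (s : G) : seq G := map (fun z => z + s) l.

Definition Bof (base : seq (seq G)) : {set {set G}} :=
  [set b : {set G} | [exists s : G, has (fun l => b == sl (blkL l s)) base]].

Lemma BofP base b :
  reflect (exists s, exists2 l, l \in base & b = sl (blkL l s)) (b \in Bof base).
Proof.
rewrite inE; apply: (iffP existsP) => [[s /hasP [l lin /eqP ->]]|[s [l lin ->]]].
  by exists s, l.
by exists s; apply/hasP; exists l.
Qed.

Lemma mem_blkL l s z : (z \in blkL l s) = (z - s \in l).
Proof.
apply/mapP/idP => [[w wl ->]|zl]; first by rewrite addrK.
by exists (z - s) => //; rewrite subrK.
Qed.

Definition trip (base : seq (seq G)) : seq (seq G * (G * G)) :=
  flatten [seq [seq (l, ab) | ab <- [seq (a, b) | a <- l, b <- l] & ab.1 != ab.2] | l <- base].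

Definition diffs base : seq G := [seq t.2.1 - t.2.2 | t <- trip base].

Definition chk_blocks (base : seq (seq G)) :=
  all (fun l => uniq l && (size l == 7)%N) base.

Definition chk_df (base : seq (seq G)) :=
  let d := diffs base in uniq d && all (fun g => (g == 0) || (g \in d)) genG.

Lemma mem_trip base l a b :
  ((l, (a, b)) \in trip base) = [&& l \in base, a \in l, b \in l & a != b].
Proof.
apply/flattenP/idP.
  move=> [s /mapP [l' l'in ->] /mapP [[a' b']]].
  rewrite mem_filter /= => /andP [neq /allpairsP [[x y] [/= xin yin [ea eb]]]] [el ea' eb'].
  subst; by rewrite l'in xin yin.
move=> /and4P [lin ain bin neq].
exists [seq (l, ab) | ab <- [seq (a, b) | a <- l, b <- l] & ab.1 != ab.2].
  by apply/mapP; exists l.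
apply/mapP; exists (a, b) => //.
rewrite mem_filter /= neq /=.
by apply/allpairsP; exists (a, b).
Qed.

Lemma uniq_map_inj (T1 T2 : eqType) (f : T1 -> T2) (s : seq T1) x y :
  uniq (map f s) -> x \in s -> y \in s -> f x = f y -> x = y.
Proof.
elim: s => //= z s IH /andP [fz us].
rewrite !inE => /orP [/eqP ->|xs] /orP [/eqP ->|ys] //.
- move=> e; move: fz; by rewrite e map_f.
- move=> e; move: fz; by rewrite -e map_f.
- exact: IH.
Qed.

Section Dev.
Variable base : seq (seq G).
Hypothesis Hb : chk_blocks base.
Hypothesis Hd : chk_df base.

Lemma card_sl L : uniq L -> #|sl L| = size L.
Proof. by move=> u; rewrite cardsE; apply/card_uniqP. Qed.

Lemma dev_card b : b \in Bof base -> #|b| = 7%N.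
Proof.
move=> /BofP [s [l lin ->]].
move/allP: Hb => /(_ l lin) /andP [ul /eqP sz].
rewrite card_sl ?size_map //.
by rewrite map_inj_uniq // => x y; apply: addIr.
Qed.

Lemma dev_line (x y : G) : x != y ->
  exists b0, [/\ b0 \in Bof base, x \in b0, y \in b0 &
     forall b, b \in Bof base -> x \in b -> y \in b -> b = b0].
Proof.
move=> nxy.
move/andP: Hd => [ud /allP alld].
have : (y - x) \in diffs base.
  move: (alld (y - x) (mem_genG _)); rewrite subr_eq0 eq_sym (negPf nxy) //.
move=> /mapP [[l [a b]] tin /= dxy].
move: (tin); rewrite mem_trip => /and4P [lin ain bin nab].
exists (sl (blkL l (x - b))); split.
- by apply/BofP; exists (x - b), l.
- by rewrite inE mem_blkL opprB addrC subrK.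
- by rewrite inE mem_blkL opprB addrA addrAC dxy subrK.
move=> b' /BofP [s [l' l'in ->]].
rewrite !inE !mem_blkL => xin yin.
have tin' : (l', (y - s, x - s)) \in trip base.
  rewrite mem_trip l'in xin yin /=.
  by apply: contra nxy => /eqP e; apply/eqP; apply: (addIr (- s)); rewrite e.
have e1 : a - b = y - s - (x - s) by rewrite -dxy opprB addrA subrK.
have [el ea eb] := uniq_map_inj ud tin tin' e1.
have e2 : x - b = s by rewrite eb opprB addrC subrK.
by rewrite e2 el.
Qed.

Lemma dev_steiner : steiner_system 2 7 (Bof base).
Proof.
split => //; first exact: dev_card.
move=> S /eqP /cards2P [x [y [nxy ->]]].
have [b0 [b0in xin yin uniq0]] := dev_line nxy.
apply/eqP/cards1P; exists b0.
apply/setP => b; rewrite in_set1 in_set subUset !sub1set.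
apply/idP/idP.
  by move=> /and3P [bin xb yb]; apply/eqP; apply: uniq0.
by move=> /eqP ->; rewrite b0in xin yin.
Qed.

End Dev.


Definition Tr (B : {set {set G}}) (p : G) (L1 L2 L3 : {set G}) : {set {set G}} :=
  [set N in B | [&& p \notin N, N :&: L1 != set0, N :&: L2 != set0 & N :&: L3 != set0]].

Definition PmAt (m : nat) (B : {set {set G}}) (p : G) : Prop :=
  exists L1 L2 L3, [/\ [&& L1 \in B, L2 \in B & L3 \in B],
     [&& p \in L1, p \in L2 & p \in L3],
     [&& L1 != L2, L1 != L3 & L2 != L3] & (m <= #|Tr B p L1 L2 L3|)%N].

Lemma Pm_transport m (g : {perm G}) (B B' : {set {set G}}) p :
  [set g @: (b : {set G}) | b in B] \subset B' -> PmAt m B p -> PmAt m B' (g p).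
Proof.
move=> /subsetP sub [L1 [L2 [L3 [/and3P [i1 i2 i3] /and3P [p1 p2 p3] /and3P [n12 n13 n23] cnt]]]].
have gi : injective g by apply: perm_inj.
have gsi : injective (fun A : {set G} => g @: A) by apply: imset_inj.
have inB b : b \in B -> g @: b \in B' by move=> bi; apply: sub; apply: imset_f.
have gin x (A : {set G}) : (g x \in g @: A) = (x \in A) by apply: mem_imset.
have gneq (A A' : {set G}) : A != A' -> g @: A != g @: A'.
  by apply: contra => /eqP /gsi ->.
exists (g @: L1), (g @: L2), (g @: L3); split.
- by rewrite !inB.
- by rewrite !gin p1 p2 p3.
- by rewrite !gneq.
apply: (leq_trans cnt).
rewrite -(card_imset (mem (Tr B p L1 L2 L3)) gsi).
apply: subset_leq_card; apply/subsetP => N' /imsetP [N NT ->].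
move: NT; rewrite !inE => /andP [NB /and4P [pN c1 c2 c3]].
have gI (A : {set G}) : g @: N :&: g @: A = g @: (N :&: A).
  by rewrite imsetI //; move=> x y _ _; apply: gi.
rewrite inB // gin pN /= !gI !imset_eq0 c1 c2 c3.
by [].
Qed.

Definition tau (c : G) : {perm G} := perm (addIr c).

Lemma tau_sub base c : [set tau c @: (b : {set G}) | b in Bof base] \subset Bof base.
Proof.
apply/subsetP => b' /imsetP [b /BofP [s [l lin ->]] ->].
apply/BofP; exists (s + c), l => //.
apply/setP => z; rewrite inE mem_blkL.
apply/imsetP/idP => [[w] |zin].
  rewrite inE mem_blkL permE => win ->.
  by rewrite opprD addrACA subrr addr0.
exists (z - c); last by rewrite permE subrK.
by rewrite inE mem_blkL -addrA -opprD (addrC c s).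
Qed.

Lemma PmAt0 m base p : PmAt m (Bof base) p -> PmAt m (Bof base) 0.
Proof.
move=> H; have := Pm_transport (tau_sub base (- p)) H.
by rewrite permE subrr.
Qed.

Definition lines0 (base : seq (seq G)) : seq (seq G) :=
  flatten [seq [seq blkL l (- a) | a <- l] | l <- base].
Definition allblocks (base : seq (seq G)) : seq (seq G) :=
  flatten [seq [seq blkL l s | s <- genG] | l <- base].
Definition pat (tab : seq nat) (b : seq G) : seq nat :=
  [seq nth 0%N tab (val z) | z <- b & z != 0 :> G].
Definition chk_tab (L0 : seq (seq G)) (tab : seq nat) :=
  all (fun j => all (fun a : G => (a == 0) || (nth 0%N tab (val a) == j)) (nth [::] L0 j))
      (iota 0 (size L0)).
Definition cntv (s : seq nat) : seq nat := foldl (fun c x => incr_nth c x) [::] s.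
Definition chk_cnt (n0 : nat) (pats : seq (seq nat)) (m : nat) :=
  all (fun j1 => let S1 := [seq q <- pats | j1 \in q] in
    all (fun j2 => if j2 == j1 then true else
      (let c := cntv (flatten [seq q <- S1 | j2 \in q]) in
       all (fun j3 => [|| j3 == j1, j3 == j2 | (nth 0%N c j3 < m)%N]) (iota 0 n0)))
      (iota 0 n0)) (iota 0 n0).
Definition chk2 (base : seq (seq G)) (m : nat) :=
  let L0 := lines0 base in
  let tab := [seq find (fun L => z \in L) L0 | z <- genG] in
  chk_tab L0 tab && chk_cnt (size L0) [seq pat tab b | b <- allblocks base] m.

Lemma nth_foldl_incr (c s : seq nat) j :
  nth 0%N (foldl (fun c x => incr_nth c x) c s) j = (nth 0%N c j + count_mem j s)%N.
Proof.
elim: s c => [|x s IH] c /=; first by rewrite addn0.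
by rewrite IH nth_incr_nth addnA [((x == j) + _)%N]addnC (eq_sym x j).
Qed.

Lemma count_has_flatten (x : nat) (ss : seq (seq nat)) :
  (count (fun q => x \in q) ss <= count_mem x (flatten ss))%N.
Proof.
elim: ss => //= q ss IH; rewrite count_cat.
rewrite leq_add //.
case xq: (x \in q) => //=.
by rewrite -has_count has_pred1.
Qed.

Lemma lines0_cover base L :
  L \in Bof base -> 0 \in L ->
  exists2 j, (j < size (lines0 base))%N & L = sl (nth [::] (lines0 base) j).
Proof.
move=> /BofP [s [l lin ->]]; rewrite inE mem_blkL sub0r => ain.
have mem : blkL l s \in lines0 base.
  apply/flattenP; exists [seq blkL l (- a) | a <- l]; first by apply/mapP; exists l.
  by apply/mapP; exists (- s); rewrite ?opprK.
by exists (index (blkL l s) (lines0 base)); rewrite ?index_mem ?nth_index.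
Qed.

Section Bound.
Variables (base : seq (seq G)) (m : nat) (tab : seq nat).
Let L0 := lines0 base.
Hypothesis Ht : chk_tab L0 tab.
Hypothesis Hc : chk_cnt (size L0) [seq pat tab b | b <- allblocks base] m.

Lemma bound0 : ~ PmAt m (Bof base) 0.
Proof.
move=> [L1 [L2 [L3 [/and3P [i1 i2 i3] /and3P [p1 p2 p3] /and3P [n12 n13 n23] cnt]]]].
have [j1 j1s e1] := lines0_cover i1 p1.
have [j2 j2s e2] := lines0_cover i2 p2.
have [j3 j3s e3] := lines0_cover i3 p3.
have lineOf j a : (j < size L0)%N -> a \in sl (nth [::] L0 j) -> a != 0 ->
    nth 0%N tab (val a) = j.
  move=> js; rewrite inE => aj an0.
  move/allP: Ht => /(_ j); rewrite mem_iota add0n js => /(_ erefl) /allP /(_ a aj).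
  by rewrite (negPf an0) => /eqP.
have nj12 : j2 != j1 by apply: contra n12 => /eqP e; rewrite e1 e2 e.
have nj13 : j3 != j1 by apply: contra n13 => /eqP e; rewrite e1 e3 e.
have nj23 : j3 != j2 by apply: contra n23 => /eqP e; rewrite e2 e3 e.
move/allP: Hc => /(_ j1); rewrite mem_iota add0n j1s => /(_ erefl) /allP /(_ j2).
rewrite mem_iota add0n j2s (negPf nj12) => /(_ erefl) /allP /(_ j3).
rewrite mem_iota add0n j3s (negPf nj13) (negPf nj23) /= nth_foldl_incr nth_nil add0n => /(_ erefl).
set S12 := flatten _ => lt.
suff : (#|Tr (Bof base) 0%R L1 L2 L3| <= count_mem j3 S12)%N.
  by move=> le; have := leq_ltn_trans (leq_trans cnt le) lt; rewrite ltnn.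
pose P (b : seq G) := [&& j1 \in pat tab b, j2 \in pat tab b & j3 \in pat tab b].
apply: (@leq_trans (count P (allblocks base))).
  apply: (@leq_trans #|[set N in [seq sl b | b <- allblocks base & P b]]|); last first.
    by rewrite cardsE (leq_trans (card_size _)) // size_map size_filter.
  apply: subset_leq_card; apply/subsetP => N.
  move=> NT; rewrite inE; move: NT; rewrite in_set => /andP [/BofP [s [l lin eN]] /and4P [zN c1 c2 c3]].
  apply/mapP; exists (blkL l s) => //.
  rewrite mem_filter; apply/andP; split; last first.
    apply/flattenP; exists [seq blkL l s0 | s0 <- genG]; first by apply/mapP; exists l.
    apply/mapP; exists s => //; exact: mem_genG.
  have inpat j (L : {set G}) : (j < size L0)%N -> L = sl (nth [::] L0 j) ->
      N :&: L != set0 -> j \in pat tab (blkL l s).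
    move=> js eL /set0Pn [a]; rewrite inE => /andP [aN aL].
    have an0 : a != 0 by apply: contraNneq zN => <-.
    apply/mapP; exists a; first by rewrite mem_filter an0 /=; move: aN; rewrite eN inE.
    by rewrite (lineOf j) // -eL.
  by rewrite /P (inpat j1 L1) // (inpat j2 L2) // (inpat j3 L3).
apply: leq_trans (count_has_flatten j3 _).
rewrite !count_filter count_map.
apply: eq_leq; apply: eq_count => b /=.
by rewrite /P; case: (j1 \in _); case: (j2 \in _); case: (j3 \in _).
Qed.

End Bound.

Lemma chk2_notPm base m : chk2 base m -> forall p, ~ PmAt m (Bof base) p.
Proof.
rewrite /chk2 => /andP [ht hc] p /PmAt0.
exact: bound0 ht hc.
Qed.

Definition canon (w : seq G) : seq G := [seq z <- genG | z \in w].
Definition wt1 (base : seq (seq G)) (L : seq G) := (L \in lines0 base) && (0 \in L).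
Definition wt2 (A B : seq G) := has (fun z => z \notin B) A.
Definition wt3 (W : seq (seq G)) (L1 L2 L3 : seq G) :=
  all (fun w : seq G => [&& 0 \notin w, has (fun z => z \in L1) w, has (fun z => z \in L2) w &
                        has (fun z => z \in L3) w]) W.
Definition wt4 (W : seq (seq G)) (m : nat) := uniq (map canon W) && (m <= size W)%N.
Definition wt5 (base : seq (seq G)) W := all (fun w : seq G => w \in allblocks base) W.
Definition chkW (base : seq (seq G)) (m : nat) (L1 L2 L3 : seq G) (W : seq (seq G)) :=
  [&& wt1 base L1, wt1 base L2, wt1 base L3, wt2 L1 L2, wt2 L1 L3, wt2 L2 L3, wt5 base W,
      wt3 W L1 L2 L3 & wt4 W m].

Lemma lines0_in base L : L \in lines0 base -> sl L \in Bof base.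
Proof.
move=> /flattenP [s /mapP [l lin ->] /mapP [a ain ->]].
by apply/BofP; exists (- a), l.
Qed.

Lemma allblocks_in base L : L \in allblocks base -> sl L \in Bof base.
Proof.
move=> /flattenP [s /mapP [l lin ->] /mapP [a ain ->]].
by apply/BofP; exists a, l.
Qed.

Lemma witness base m L1 L2 L3 W : chkW base m L1 L2 L3 W -> PmAt m (Bof base) 0.
Proof.
case/and5P => /andP [l1 z1] /andP [l2 z2] /andP [l3 z3] d12 /and5P [d13 d23 Wa Wp /andP [uW szW]].
have dist (A B : seq G) : wt2 A B -> sl A != sl B.
  move=> /hasP [z zA zB]; apply/eqP => e.
  have : z \in sl A by rewrite inE.
  by rewrite e inE (negPf zB).
exists (sl L1), (sl L2), (sl L3); split.
- by rewrite !lines0_in.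
- by rewrite !inE z1 z2 z3.
- by rewrite !dist.
apply: (leq_trans szW).
have usl : uniq (map sl W).
  apply: (@map_uniq _ _ (fun S : {set G} => [seq z <- genG | z \in S])).
  rewrite -map_comp.
  suff -> : [seq ((fun S : {set G} => [seq z <- genG | z \in S]) \o sl) i | i <- W] = map canon W by [].
  apply: eq_map => w; rewrite /canon /comp; apply: eq_filter => z; by rewrite inE.
rewrite -(size_map sl) -(card_uniqP usl) -cardsE.
apply: subset_leq_card; apply/subsetP => N; rewrite inE => /mapP [w win ->].
move/allP: Wa => /(_ w win) wa.
move/allP: Wp => /(_ w win) /and4P [w0 h1 h2 h3].
have ne (L : seq G) : has (fun z => z \in L) w -> sl w :&: sl L != set0.
  by move=> /hasP [z zw zL]; apply/set0Pn; exists z; rewrite !inE zw zL.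
rewrite in_set (allblocks_in wa) inE w0 !ne //.
Qed.

Definition base1 : seq (seq G) :=
  [:: [:: inZp 0; inZp 101; inZp 457; inZp 292; inZp 412; inZp 187; inZp 167];
   [:: inZp 0; inZp 202; inZp 103; inZp 173; inZp 168; inZp 493; inZp 73];
   [:: inZp 0; inZp 114; inZp 253; inZp 288; inZp 309; inZp 137; inZp 312];
   [:: inZp 0; inZp 64; inZp 18; inZp 268; inZp 14; inZp 387; inZp 122];
   [:: inZp 0; inZp 284; inZp 143; inZp 53; inZp 504; inZp 297; inZp 352];
   [:: inZp 0; inZp 124; inZp 98; inZp 393; inZp 469; inZp 87; inZp 47];
   [:: inZp 0; inZp 424; inZp 498; inZp 8; inZp 219; inZp 102; inZp 177];
   [:: inZp 0; inZp 2; inZp 71; inZp 229; inZp 317; inZp 360; inZp 379];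
   [:: inZp 0; inZp 72; inZp 31; inZp 164; inZp 302; inZp 335; inZp 9];
   [:: inZp 0; inZp 67; inZp 106; inZp 349; inZp 267; inZp 445; inZp 324];
   [:: inZp 0; inZp 392; inZp 281; inZp 444; inZp 17; inZp 365; inZp 49];
   [:: inZp 0; inZp 477; inZp 16; inZp 329; inZp 107; inZp 10; inZp 249]].
Definition base2 : seq (seq G) :=
  [:: [:: inZp 0; inZp 101; inZp 345; inZp 300; inZp 195; inZp 455; inZp 220];
   [:: inZp 0; inZp 202; inZp 376; inZp 406; inZp 476; inZp 471; inZp 291];
   [:: inZp 0; inZp 329; inZp 468; inZp 280; inZp 197; inZp 408; inZp 427];
   [:: inZp 0; inZp 229; inZp 183; inZp 485; inZp 22; inZp 43; inZp 222];
   [:: inZp 0; inZp 164; inZp 23; inZp 290; inZp 287; inZp 33; inZp 417];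
   [:: inZp 0; inZp 349; inZp 323; inZp 340; inZp 232; inZp 178; inZp 367];
   [:: inZp 0; inZp 444; inZp 13; inZp 120; inZp 272; inZp 348; inZp 82];
   [:: inZp 0; inZp 1; inZp 48; inZp 56; inZp 114; inZp 337; inZp 369];
   [:: inZp 0; inZp 36; inZp 213; inZp 501; inZp 64; inZp 12; inZp 154];
   [:: inZp 0; inZp 286; inZp 93; inZp 361; inZp 284; inZp 432; inZp 494];
   [:: inZp 0; inZp 196; inZp 318; inZp 371; inZp 124; inZp 402; inZp 109];
   [:: inZp 0; inZp 491; inZp 338; inZp 226; inZp 424; inZp 332; inZp 389]].

Lemma hb1 : chk_blocks base1. Proof. by vm_compute. Qed.
Lemma hd1 : chk_df base1. Proof. by vm_compute. Qed.
Lemma hb2 : chk_blocks base2. Proof. by vm_compute. Qed.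
Lemma hd2 : chk_df base2. Proof. by vm_compute. Qed.
Lemma hc2 : chk2 base2 10. Proof. by vm_compute. Qed.
Lemma hw1 : chkW base1 10 (nth [::] (lines0 base1) 37) (nth [::] (lines0 base1) 51)
   (nth [::] (lines0 base1) 83) [:: blkL (nth [::] base1 0) (inZp 79); blkL (nth [::] base1 1) (inZp 268); blkL (nth [::] base1 1) (inZp 363); blkL (nth [::] base1 2) (inZp 158); blkL (nth [::] base1 3) (inZp 144); blkL (nth [::] base1 4) (inZp 11); blkL (nth [::] base1 8) (inZp 459); blkL (nth [::] base1 9) (inZp 140); blkL (nth [::] base1 9) (inZp 494); blkL (nth [::] base1 11) (inZp 484)].
Proof. by vm_compute. Qed.

Local Close Scope ring_scope.

Theorem mainTheorem1 :
  (exists B1 B2 : {set {set 'I_505}},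
     [/\ steiner_system 2 7 B1, steiner_system 2 7 B2 & ~ design_iso B1 B2])
  /\ (exists B : {set {set 'I_505}}, steiner_system 2 7 B).
Proof.
have S1 := dev_steiner hb1 hd1.
have S2 := dev_steiner hb2 hd2.
split; last by exists (Bof base1).
exists (Bof base1), (Bof base2); split => //.
move=> [f hf].
have W := witness hw1.
have sub : [set f @: (b : {set G}) | b in Bof base1] \subset Bof base2 by rewrite hf.
exact: (chk2_notPm hc2 (Pm_transport sub W)).
Qed.
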